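(* Let $\mathsf{T}$ be a rooted plane tree and $\delta\in\mathcal{O}(\mathsf{T})$. Adjoin an imaginary node $\omega$ as the parent of the root, and set $\delta(\omega)=\mathsf{Pop}(\delta)(\omega)=\mathsf{T}\cup\{\omega\}$. Then for any two nodes $u,v\in\mathsf{T}\cup\{\omega\}$, the sets $\delta(u)$ and $\mathsf{Pop}(\delta)(v)$ are either nested (one contains the other) or disjoint.
   Context: A rooted plane tree $\mathsf{T}$ is a finite tree with a distinguished root, regarded as a poset $\leq_\mathsf{T}$ in which $v'\leq_\mathsf{T} v$ iff $v$ lies on the path from $v'$ to the root. An ornament is a nonempty set of nodes inducing a connected subgraph; an ornamentation is a map $\delta$ from nodes to ornaments such that the unique maximal element of $\delta(v)$ is $v$ and any two sets $\delta(v),\delta(v')$ are nested or disjoint. $\mathcal{O}(\mathsf{T})$ is the set of ornamentations ordered by $\delta\leq\delta'$ iff $\delta(v)\subseteq\delta'(v)$ for all $v$; it is a lattice with meet given by pointwise intersection. $\mathsf{Pop}(\delta)=\bigwedge(\{\delta\}\cup\{\delta':\delta'\lessdot\delta\})$, where $\lessdot$ is the cover relation. *)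

(* Defs.v *)
From mathcomp Require Import all_boot.
Set Implicit Arguments. Unset Strict Implicit. Unset Printing Implicit Defensive.

Section Tree.
Variables (T : finType) (root : T) (par : T -> T).

(* A rooted tree on the finite node set T: root is its own "parent"
   (sentinel) and every node reaches the root by iterating par. *)
Definition is_rooted_tree : Prop :=
  par root = root /\ forall x : T, exists n, iter n par x = root.

(* v' <=_T v  iff  v lies on the path from v' to the root. *)
Definition tle (x y : T) : bool := connect (frel par) x y.

Definition tadj (x y : T) : bool := (x != y) && ((par x == y) || (par y == x)).

Definition induced_connected (S : {set T}) : bool :=
  [forall x in S, forall y in S,
     connect (fun a b => [&& a \in S, b \in S & tadj a b]) x y].

Definition ornament (S : {set T}) : bool := (S != set0) && induced_connected S.

Definition maximal_elems (S : {set T}) : {set T} :=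
  [set x in S | [forall y in S, tle x y ==> (y == x)]].

Definition nested_or_disjoint (U : finType) (A B : {set U}) : bool :=
  [|| A \subset B, B \subset A | [disjoint A & B]].

Definition ornamentation (d : {ffun T -> {set T}}) : bool :=
  [forall v, ornament (d v) && (maximal_elems (d v) == [set v])] &&
  [forall v, forall v', nested_or_disjoint (d v) (d v')].

Definition orn_le (d d' : {ffun T -> {set T}}) : bool :=
  [forall v, d v \subset d' v].

Definition orn_lt (d d' : {ffun T -> {set T}}) : bool :=
  [&& ornamentation d, ornamentation d', d != d' & orn_le d d'].

Definition orn_covby (d' d : {ffun T -> {set T}}) : bool :=
  orn_lt d' d && ~~ [exists e, orn_lt d' e && orn_lt e d].

(* Pop(d): meet (pointwise intersection) of d and all elements it covers *)
Definition Pop (d : {ffun T -> {set T}}) : {ffun T -> {set T}} :=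
  [ffun v => d v :&: \bigcap_(d' | orn_covby d' d) d' v].

(* Adjoin the imaginary node omega = None as parent of the root,
   with value T u {omega}. *)
Definition extend (d : {ffun T -> {set T}}) (u : option T) : {set option T} :=
  match u with
  | None => setT
  | Some v => Some @: d v
  end.

End Tree.

(* Main.v *)
Require Import Defs.
From mathcomp Require Import all_boot.
From mathcomp Require Import zify.
Set Implicit Arguments. Unset Strict Implicit.

Section S.
Variables (T : finType) (root : T) (par : T -> T).
Hypothesis htree : is_rooted_tree root par.

Lemma iter_root n : iter n par root = root.
Proof. case: htree => hr _; elim: n => //= n ->; exact: hr. Qed.

Lemma iter_large x : exists N, forall m, N <= m -> iter m par x = root.
Proof.
case: htree => _ /(_ x) [N hN]; exists N => m hm.
by rewrite -(subnK hm) iterD hN iter_root.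
Qed.

Lemma tle_iter x n : tle par x (iter n par x).
Proof. exact: fconnect_iter. Qed.

Lemma tle_ex x y : tle par x y -> exists n, iter n par x = y.
Proof. move=> h; exists (findex par x y); exact: iter_findex. Qed.

Lemma tle_antisym x y : tle par x y -> tle par y x -> x = y.
Proof.
move=> /tle_ex [a ha] /tle_ex [b hb].
have hx : iter (b + a) par x = x by rewrite iterD ha hb.
have hm : forall m, iter (m * (b + a)) par x = x.
  elim=> [|m IH] //=; by rewrite mulSn iterD IH hx.
case: (posnP (b + a)) => hab.
  have a0 : a = 0 by lia.
  by rewrite -ha a0.
have [N hN] := iter_large x.
have xr : x = root by rewrite -(hm N) hN // leq_pmulr.
by rewrite -ha xr iter_root.
Qed.

Lemma below_max (S : {set T}) w x :
  maximal_elems par S = [set w] -> x \in S -> tle par x w.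
Proof.
move=> hmax xS.
have [N hN] := iter_large x.
pose P := fun k => (k <= N) && (iter k par x \in S).
have exP : exists k, P k by exists 0; rewrite /P xS.
have ubP : forall k, P k -> k <= N by move=> k /andP[].
case: (ex_maxnP exP ubP) => k /andP[kN kS] kmax.
suff : iter k par x \in maximal_elems par S.
  by rewrite hmax inE => /eqP <-; exact: tle_iter.
rewrite inE kS /=; apply/forallP => z; apply/implyP => zS; apply/implyP.
move=> /tle_ex [j hj]; rewrite -hj -iterD.
case: (leqP (j + k) N) => hjk.
  have : j + k <= k by apply: kmax; rewrite /P hjk iterD hj zS.
  by move=> h; have -> : j = 0 by lia.
have hz : iter (j + k) par x = root by apply: hN; lia.
have : N <= k by apply: kmax; rewrite /P leqnn hN // -hz iterD hj zS.
move=> hNk; have -> : k = N by lia.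
by rewrite !hN // leq_addl.
Qed.

Lemma max_self (S : {set T}) w : maximal_elems par S = [set w] -> w \in S.
Proof. move=> h; have : w \in maximal_elems par S by rewrite h set11.
by rewrite inE => /andP[]. Qed.

Lemma orn_max d : ornamentation par d -> forall v, maximal_elems par (d v) = [set v].
Proof. case/andP => /forallP h _ v. by case/andP: (h v) => _ /eqP. Qed.
Lemma orn_orn d : ornamentation par d -> forall v, ornament par (d v).
Proof. case/andP => /forallP h _ v. by case/andP: (h v). Qed.
Lemma orn_nest d : ornamentation par d -> forall v v', nested_or_disjoint (d v) (d v').
Proof. case/andP => _ /forallP h v v'; exact: (forallP (h v) v'). Qed.

Lemma in_sub d (hd : ornamentation par d) w u : w \in d u -> d w \subset d u.
Proof.
move=> wu; have := orn_nest hd w u; case/or3P => // h.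
  have uw : u \in d w by apply: (subsetP h); exact: max_self (orn_max hd u).
  have e := tle_antisym (below_max (orn_max hd w) uw) (below_max (orn_max hd u) wu).
  by rewrite e.
by rewrite (disjointFr h (max_self (orn_max hd w))) in wu.
Qed.

Lemma claimC d (hd : ornamentation par d) d' (hc : orn_covby par d' d) u v :
  v \notin d u -> d u \subset d v -> (d u \subset d' v) || [disjoint d u & d' v].
Proof.
move=> hv huv.
case/andP: hc => /and4P[hd' _ _ hle] hno.
case: (boolP (d u \subset d' v)) => hB //=.
pose e := [ffun w => if w \in d u then d' w else d w].
have he : ornamentation par e.
  apply/andP; split; apply/forallP => w.
    by rewrite ffunE; case: ifP => _; rewrite orn_orn //= orn_max // eqxx.
  apply/forallP => w'; rewrite !ffunE.
  case: (boolP (w \in d u)) => hw; case: (boolP (w' \in d u)) => hw'.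
  - exact: orn_nest.
  - have s1 : d' w \subset d u.
      exact: subset_trans (forallP hle w) (in_sub hd hw).
    case/or3P: (orn_nest hd w' u) => h.
    + by rewrite (subsetP h _ (max_self (orn_max hd w'))) in hw'.
    + by apply/or3P; apply: Or31; exact: subset_trans s1 h.
    + by apply/or3P; apply: Or33; rewrite disjoint_sym; exact: disjointWr s1 h.
  - have s1 : d' w' \subset d u.
      exact: subset_trans (forallP hle w') (in_sub hd hw').
    case/or3P: (orn_nest hd w u) => h.
    + by rewrite (subsetP h _ (max_self (orn_max hd w))) in hw.
    + by apply/or3P; apply: Or32; exact: subset_trans s1 h.
    + by apply/or3P; apply: Or33; exact: disjointWr s1 h.
  - exact: orn_nest.
have hle' : orn_le d' e.
  apply/forallP => w; rewrite ffunE; case: ifP => _; [exact: subxx | exact: (forallP hle w)].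
have hle2 : orn_le e d.
  apply/forallP => w; rewrite ffunE; case: ifP => _; [exact: (forallP hle w) | exact: subxx].
have hne : d' != e.
  apply/eqP => h; move: hB; rewrite h ffunE (negbTE hv) huv //.
have hed : e = d.
  apply/eqP; apply: contraNT hno => hne2; apply/existsP; exists e.
  by rewrite /orn_lt hd' he hne hle' hd hne2 hle2.
have hu : d' u = d u.
  by rewrite -hed ffunE (max_self (orn_max hd u)).
case/or3P: (orn_nest hd' v u); rewrite hu => h.
- by rewrite (subsetP h _ (max_self (orn_max hd' v))) in hv.
- by rewrite h in hB.
- by rewrite disjoint_sym.
Qed.

Lemma main_pt d (hd : ornamentation par d) u v :
  nested_or_disjoint (d u) (Pop par d v).
Proof.
rewrite /Pop ffunE; apply/or3P.
case/or3P: (orn_nest hd u v) => h.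
- case: (boolP (v \in d u)) => hv.
    apply: Or32; exact: subset_trans (subsetIl _ _) (in_sub hd hv).
  case: (boolP [forall d', orn_covby par d' d ==> (d u \subset d' v)]) => hall.
    apply: Or31; rewrite subsetI h /=; apply/bigcapsP => d' hc.
    exact: (implyP (forallP hall d') hc).
  move: hall; rewrite negb_forall => /existsP [d' /negP hn].
  have hc : orn_covby par d' d by apply/negPn/negP => hc; apply: hn; rewrite (negbTE hc).
  have hs : ~~ (d u \subset d' v) by apply/negP => hs; apply: hn; rewrite hs implybT.
  have := claimC hd hc hv h; rewrite (negbTE hs) /= => hdis.
  apply: Or33; apply: disjointWr hdis.
  by apply: subIset; apply/orP; right; by apply: (@bigcap_inf _ _ d' _ (fun e => e v)).

- apply: Or32; exact: subset_trans (subsetIl _ _) h.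
- apply: Or33; exact: disjointWr (subsetIl _ _) h.
Qed.
End S.

Theorem lemma4p1 (T : finType) (root : T) (par : T -> T)
  (htree : is_rooted_tree root par)
  (d : {ffun T -> {set T}}) (hd : ornamentation par d) :
  forall u v : option T,
    nested_or_disjoint (extend d u) (extend (Pop par d) v).
Proof.
case=> [u|] [v|] /=; rewrite /nested_or_disjoint ?subsetT ?orbT //.
case/or3P: (main_pt htree hd u v) => h.
- by rewrite (imsetS Some h).
- by rewrite (imsetS Some h) orbT.
- by rewrite (imset_disjoint Some_inj) h !orbT.
Qed.
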